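(* Let $B_1$ and $B_2$ be finite Blaschke products of degrees $M$ and $N$ respectively, and let $0<r<1$. If $|B_1(z)|=|B_2(z)|$ for more than $2N+2M-1$ distinct points $z\in r\mathbb{T}$, then $B_2$ is a constant multiple of $B_1$.
   Context: $r\mathbb{T}=\{z\in\mathbb{C}:|z|=r\}$. A finite Blaschke product of degree $M$ is a function $c\prod_{j=1}^M\frac{z-\alpha_j}{1-\overline{\alpha_j}z}$ with $|c|=1$ and $\alpha_j$ in the open unit disc. *)

(* Defs.v *)
From HB Require Import structures.
From mathcomp Require Import all_boot all_order all_algebra.
From mathcomp Require Import complex.
Set Implicit Arguments. Unset Strict Implicit. Unset Printing Implicit Defensive.
Import Order.TTheory GRing.Theory Num.Theory.
Local Open Scope ring_scope.

Definition blaschke (R : rcfType) (c : R[i]) (s : seq R[i]) (z : R[i]) : R[i] :=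
  c * \prod_(a <- s) ((z - a) / (1 - Num.conj a * z)).

Definition is_blaschke (R : rcfType) (c : R[i]) (s : seq R[i]) : Prop :=
  `|c| = 1 /\ (forall a, a \in s -> `|a| < 1).

(* Main.v *)
Require Import Defs.
From HB Require Import structures.
From mathcomp Require Import all_boot all_order all_algebra.
From mathcomp Require Import complex.
From mathcomp Require Import ring zify.
Import Order.TTheory GRing.Theory Num.Theory.
Local Open Scope ring_scope.
Set Implicit Arguments. Unset Strict Implicit.

Section Key.
Variable F : numClosedFieldType.
Variable rho : F.
Hypothesis rho_ge0 : 0 <= rho.
Hypothesis rho_neq1 : rho != 1.
Hypothesis rho_neq0 : rho != 0.

Definition sig (f : {poly F}) := f \Po (rho *: 'X).

Lemma size_rhoX : size (rho *: 'X : {poly F}) = 2.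
Proof. by rewrite size_scale // size_polyX. Qed.

Lemma sigM f g : sig (f * g) = sig f * sig g.
Proof. exact: comp_polyM. Qed.

Lemma size_sig f : size (sig f) = size f.
Proof. exact: size_comp_poly2 size_rhoX. Qed.

Lemma sig_eval f x : (sig f).[x] = f.[rho * x].
Proof. by rewrite horner_comp hornerZ hornerX. Qed.

Lemma lead_sig f : lead_coef (sig f) = lead_coef f * rho ^+ (size f).-1.
Proof.
rewrite lead_coef_comp ?size_rhoX // lead_coefZ lead_coefX mulr1 //.
Qed.

Lemma eig u v : coprimep u v -> u * sig v = v * sig u -> u != 0 ->
  sig u = rho ^+ (size u).-1 *: u.
Proof.
move=> cop e u0.
have d1 : u %| sig u.
  rewrite -(Gauss_dvdpr _ cop) -e. exact: dvdp_mulr.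
have : u %= sig u by rewrite -(dvdp_size_eqp d1) size_sig.
move/eqp_eq; rewrite lead_sig => H.
have lu : lead_coef u != 0 by rewrite lead_coef_eq0.
apply: (@scalerI _ _ (lead_coef u)) => //.
by rewrite -H scalerA mulrC.
Qed.

Lemma key p q : p != 0 -> q != 0 -> p * sig q = q * sig p ->
  exists l, q = l *: p.
Proof.
move=> p0 q0 e.
set g := gcdp p q.
have pg : p = (p %/ g) * g by rewrite divpK // dvdp_gcdl.
have qg : q = (q %/ g) * g by rewrite divpK // dvdp_gcdr.
set p' := p %/ g in pg. set q' := q %/ g in qg.
have cop : coprimep p' q' by apply: coprimep_div_gcd; rewrite p0.
have g0 : g != 0 by apply: contra p0 => /eqP g0; rewrite pg g0 mulr0.
have p'0 : p' != 0 by apply: contra p0 => /eqP h; rewrite pg h mul0r.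
have q'0 : q' != 0 by apply: contra q0 => /eqP h; rewrite qg h mul0r.
have sg0 : sig g != 0 by rewrite -size_poly_eq0 size_sig size_poly_eq0.
have e' : p' * sig q' = q' * sig p'.
  apply: (@mulIf _ (g * sig g)); first by rewrite mulf_neq0.
  move: e; rewrite pg qg !sigM => e.
  transitivity (p' * g * (sig q' * sig g)); first by ring.
  by rewrite e; ring.
have ep := eig cop e' p'0.
have cop' : coprimep q' p' by rewrite coprimep_sym.
have eqq := eig cop' (esym e') q'0.
set k := (size p').-1 in ep. set l := (size q').-1 in eqq.
have ekl : rho ^+ k = rho ^+ l.
  move: e'; rewrite ep eqq -!mul_polyC.
  rewrite mulrCA [q' * _]mulrCA [q' * p']mulrC => h.
  have pq0 : p' * q' != 0 by rewrite mulf_neq0.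
  by move/(mulIf pq0)/polyC_inj: h.
have zer (u : {poly F}) m : sig u = rho ^+ m *: u -> rho ^+ m != 1 -> u.[0] = 0.
  move=> h hm; have := sig_eval u 0; rewrite h hornerZ mulr0 => h2.
  have : (1 - rho ^+ m) * u.[0] == 0 by rewrite mulrBl mul1r h2 subrr.
  by rewrite mulf_eq0 subr_eq0 eq_sym (negPf hm) => /eqP.
have k1 : rho ^+ k = 1.
  apply/eqP; apply/negPn/negP => hk.
  have h1 := zer _ _ ep hk.
  have h2 : q'.[0] = 0 by apply: (zer _ _ eqq); rewrite -ekl.
  have r1 : root p' 0 by apply/rootP.
  by move: (coprimep_root cop r1); rewrite h2 eqxx.
have l1 : rho ^+ l = 1 by rewrite -ekl.
have sz (u : {poly F}) m : u != 0 -> m = (size u).-1 -> rho ^+ m = 1 -> u = (u`_0)%:P.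
  move=> u0 -> /eqP; rewrite pexprn_eq1 // (negPf rho_neq1) orbF => /eqP h.
  apply: size1_polyC; move: u0; rewrite -size_poly_eq0.
  by case: (size u) h => [|[]].
have e1 := sz p' k p'0 erefl k1.
have e2 := sz q' l q'0 erefl l1.
have pc : p'`_0 != 0 by apply: contra p'0 => /eqP h; rewrite e1 h.
exists (q'`_0 / p'`_0).
move: pc e1 e2; set c := p'`_0; set d := q'`_0 => pc e1 e2.
by rewrite pg qg e1 e2 !mul_polyC scalerA divfK.
Qed.
End Key.
Section Main.
Variable R : rcfType.
Local Notation C := R[i].

Definition Pp (s : seq C) : {poly C} := \prod_(a <- s) ('X - a%:P).
Definition Qp (s : seq C) : {poly C} := \prod_(a <- s) (1 - Num.conj a *: 'X).

Lemma hornerP s x : (Pp s).[x] = \prod_(a <- s) (x - a).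
Proof. rewrite /Pp horner_prod; apply: eq_bigr => a _; exact: hornerXsubC. Qed.

Lemma hornerQ s x : (Qp s).[x] = \prod_(a <- s) (1 - Num.conj a * x).
Proof.
rewrite /Qp horner_prod; apply: eq_bigr => a _.
by rewrite hornerD hornerN hornerZ hornerX hornerC.
Qed.

Lemma blaschkeE c s z : blaschke c s z = c * ((Pp s).[z] / (Qp s).[z]).
Proof. by rewrite /blaschke prodf_div hornerP hornerQ. Qed.

Lemma size_Qp s : (size (Qp s) <= (size s).+1)%N.
Proof.
elim: s => [|a s IH]; first by rewrite /Qp big_nil size_poly1.
rewrite /Qp big_cons -/(Qp s).
set t := (1 - _ *: 'X).
have h : (size t <= 2)%N.
  apply: (leq_trans (size_polyD _ _)); rewrite geq_max size_poly1 /= size_polyN.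
  rewrite -mul_polyC; apply: leq_trans (size_polyMleq _ _) _; rewrite size_polyX.
  by case: (size _%:P) (size_polyC_leq1 (Num.conj a)) => [|[]].
apply: leq_trans (size_polyMleq t (Qp s)) _.
rewrite /=; move: h IH; move: (size (Qp s)) (size t) => m n; lia.
Qed.

Lemma Qp_neq0 s : Qp s != 0.
Proof.
apply/negP => /eqP h; have := hornerQ s 0; rewrite h horner0.
under eq_bigr do rewrite mulr0 subr0.
by rewrite big1_eq => /esym/eqP; rewrite oner_eq0.
Qed.

Lemma Pp_neq0 s : Pp s != 0.
Proof. by rewrite -size_poly_eq0 /Pp size_prod_XsubC. Qed.

Lemma Qp_eval_neq0 s x : `|x| < 1 -> (forall a, a \in s -> `|a| < 1) ->
  (Qp s).[x] != 0.
Proof.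
move=> hx hs; rewrite hornerQ prodf_seq_neq0; apply/allP => a /hs ha /=.
rewrite subr_eq0; apply/negP => /eqP h.
have : `|Num.conj a * x| < 1 by rewrite normrM norm_conjC mulr_ilt1.
by rewrite -h normr1 ltxx.
Qed.

Lemma prod_div_seq (s : seq C) (f : C -> C) (w : C) :
  \prod_(a <- s) (f a / w) = (\prod_(a <- s) f a) / w ^+ size s.
Proof.
elim: s => [|a s IH]; first by rewrite !big_nil invr1 mulr1.
by rewrite !big_cons IH /= exprS invfM; ring.
Qed.

Lemma reflP s z w rho : w = Num.conj z -> w != 0 -> rho * z = w^-1 ->
  (Pp s).[rho * z] = Num.conj (Qp s).[z] / w ^+ size s.
Proof.
move=> wE w0 hz; rewrite hornerP hornerQ rmorph_prod -prod_div_seq hz.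
apply: eq_bigr => b _.
by rewrite rmorphB rmorph1 rmorphM /= conjCK -wE; field.
Qed.

Lemma reflQ s z w rho : w = Num.conj z -> w != 0 -> rho * z = w^-1 ->
  (Qp s).[rho * z] = Num.conj (Pp s).[z] / w ^+ size s.
Proof.
move=> wE w0 hz; rewrite hornerP hornerQ rmorph_prod -prod_div_seq hz.
apply: eq_bigr => b _.
by rewrite rmorphB /= -wE; field.
Qed.

End Main.

Lemma nat_aux1 a b c M N : (a <= (b + c).-1 -> b = M.+1 -> c <= N.+1 -> a <= (M + N).+1)%N.
Proof. lia. Qed.
Lemma nat_aux2 a b c K : (a <= (b + c).-1 -> b <= K.+1 -> c <= K.+1 -> a <= (2 * K).+1)%N.
Proof. lia. Qed.
Lemma nat_aux3 a b M N : (b.+1 < a -> a <= (2 * (M + N)).+1 -> 2 * N + 2 * M <= b -> False)%N.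
Proof. lia. Qed.

Lemma ring_aux (T : comRingType) (a b A B x y : T) :
  a * b * (B * x * (A * y)) = a * b * (A * B) * (x * y).
Proof. ring. Qed.

Theorem theorem2p11 (R : rcfType) (M N : nat)
    (c1 c2 : R[i]) (s1 s2 : seq R[i]) (r : R) :
  is_blaschke c1 s1 -> size s1 = M ->
  is_blaschke c2 s2 -> size s2 = N ->
  0 < r -> r < 1 ->
  (exists S : seq R[i],
      [/\ uniq S,
          (2 * N + 2 * M <= size S)%N (* i.e. size S > 2N + 2M - 1 *),
          (forall z, z \in S -> `|z| = (r%:C)%C) &
          (forall z, z \in S -> `|blaschke c1 s1 z| = `|blaschke c2 s2 z|)]) ->
  exists lambda : R[i], forall z : R[i], `|z| < 1 ->
    blaschke c2 s2 z = lambda * blaschke c1 s1 z.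
Proof.
move=> [nc1 hs1] sM [nc2 hs2] sN r0 r1 [S [uS szS nS eS]].
set r2 : R[i] := (r%:C)%C ^+ 2.
set rho := r2^-1.
have rC0 : (0 : R[i]) < (r%:C)%C by rewrite ltcR.
have rC1 : (r%:C)%C < (1 : R[i]) by rewrite ltcR.
have r20 : r2 != 0 by rewrite expf_neq0 // gt_eqF.
have rho0 : rho != 0 by rewrite invr_eq0.
have rho_ge0 : 0 <= rho by rewrite invr_ge0 exprn_ge0 // ltW.
have rho1 : rho != 1.
  have : r2 < 1 by rewrite expr_lt1 // ltW.
  by rewrite invr_eq1 => /lt_eqF ->.
set P1 := Pp s1. set Q1 := Qp s1. set P2 := Pp s2. set Q2 := Qp s2.
set p := P1 * Q2. set q := P2 * Q1.
have c10 : c1 != 0 by rewrite -normr_eq0 nc1 oner_eq0.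
have p0 : p != 0 by rewrite mulf_neq0 ?Pp_neq0 ?Qp_neq0.
have q0 : q != 0 by rewrite mulf_neq0 ?Pp_neq0 ?Qp_neq0.
have hS z : z \in S -> (Qp s1).[z] != 0 /\ (Qp s2).[z] != 0.
  by move=> zS; split; apply: Qp_eval_neq0 => //; rewrite nS.
have E : p * sig rho q = q * sig rho p.
  apply/eqP; rewrite -subr_eq0; apply/negPn/negP => hF.
  set Fp := p * sig rho q - q * sig rho p in hF.
  have szF : (size Fp <= (2 * (M + N)).+1)%N.
    have sP1 : size P1 = M.+1 by rewrite /P1 /Pp size_prod_XsubC sM.
    have sP2 : size P2 = N.+1 by rewrite /P2 /Pp size_prod_XsubC sN.
    have sQ1 : (size Q1 <= M.+1)%N by rewrite -sM size_Qp.
    have sQ2 : (size Q2 <= N.+1)%N by rewrite -sN size_Qp.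
    have sp := size_polyMleq P1 Q2. have sq := size_polyMleq P2 Q1.
    have s1' := size_polyMleq p (sig rho q). have s2' := size_polyMleq q (sig rho p).
    have sD := size_polyD (p * sig rho q) (- (q * sig rho p)).
    rewrite size_polyN !(size_sig rho0) in sD s2'.
    rewrite !(size_sig rho0) in s1'.
    have hp : (size p <= (M + N).+1)%N.
      exact: nat_aux1 sp sP1 sQ2.
    have hq : (size q <= (M + N).+1)%N.
      by rewrite addnC; exact: nat_aux1 sq sP2 sQ1.
    have h1 : (size (p * sig rho q)%R <= (2 * (M + N)).+1)%N.
      exact: nat_aux2 s1' hp hq.
    have h2 : (size (q * sig rho p)%R <= (2 * (M + N)).+1)%N.
      exact: nat_aux2 s2' hq hp.
    apply: (leq_trans sD); by rewrite geq_max h1 h2.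
  have roots : all (root Fp) (0 :: S).
    rewrite /= rootE; apply/andP; split.
      rewrite /Fp /p /q !(hornerD, hornerN, hornerM) !sig_eval mulr0 !hornerM.
      by rewrite [X in _ - X]mulrC subrr.
    apply/allP => z zS; rewrite rootE /Fp !(hornerD, hornerN, hornerM) !sig_eval.
    have z0 : z != 0 by rewrite -normr_eq0 nS // gt_eqF.
    set w := Num.conj z.
    have w0 : w != 0 by rewrite conjC_eq0.
    have zw : z * w = r2 by rewrite /w -normCK nS.
    have hz : rho * z = w^-1 by rewrite /rho -zw invfM mulrAC mulVf // mul1r.
    have [hq1 hq2] := hS z zS.
    have := eS z zS; rewrite !blaschkeE !normrM nc1 nc2 !mul1r !normfV => /eqP.
    rewrite eqr_div ?normr_eq0 // => /eqP H.
    have H2 : P1.[z] * Q2.[z] * Num.conj (P1.[z] * Q2.[z]) =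
              P2.[z] * Q1.[z] * Num.conj (P2.[z] * Q1.[z]).
      by rewrite -!normCK !normrM H.
    rewrite /p /q !hornerM /P1 /P2 /Q1 /Q2.
    rewrite (reflP s1 erefl w0 hz) (reflP s2 erefl w0 hz).
    rewrite (reflQ s1 erefl w0 hz) (reflQ s2 erefl w0 hz).
    move: H2; rewrite /P1 /P2 /Q1 /Q2 !rmorphM /= => H2.
    rewrite ring_aux H2 ring_aux [X in _ - _ * X]mulrC subrr //.
  have u : uniq (0 :: S).
    rewrite /= uS andbT; apply/negP => /nS; rewrite normr0 => /eqP.
    by rewrite eq_sym gt_eqF.
  have := max_poly_roots hF roots u; rewrite /=.
  move=> h; exact: nat_aux3 h szF szS.
have [l hl] := key rho_ge0 rho1 rho0 p0 q0 E.
exists (c2 * l / c1) => z hz.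
have hQ1 := Qp_eval_neq0 hz hs1.
have hQ2 := Qp_eval_neq0 hz hs2.
have hq : q.[z] = l * p.[z] by rewrite hl hornerZ.
move: hq; rewrite !blaschkeE !hornerM -/P1 -/P2 -/Q1 -/Q2 => hq.
have -> : P2.[z] = l * P1.[z] * Q2.[z] / Q1.[z].
  by rewrite -[l * _ * _]mulrA -hq mulfK.
move: hQ1 hQ2 c10; move: (P1.[z]) (Q1.[z]) (Q2.[z]) => a b d hb hd hc.
by rewrite [l * a * d / b]mulrAC mulfK // mulrA divfK // -!mulrA.
Qed.
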